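(* Let $n$ be a positive integer and $t\ge 3$. Then $\tilde{R}(\dot C^{(rbr)}_{t},Q_n)\le (t-1)n$.
   Context: $\dot C_t^{(rbr)}$ denotes the chain on $t$ vertices colored alternately red and blue, with red minimal vertex. $Q_N$ is the Boolean lattice of all subsets of an $N$-element set ordered by inclusion. In a blue/red coloring of $Q_N$, a copy of a colored poset $\dot P$ is an induced subposet isomorphic to $P$ with matching colors. The poset Erdős–Hajnal number $\tilde{R}(\dot P,Q_n)$ is the minimum $N$ such that every blue/red coloring of $Q_N$ contains a copy of $\dot P$ or a monochromatic induced copy of $Q_n$. *)

(* Defs.v *)
From mathcomp Require Import all_boot.
Set Implicit Arguments. Unset Strict Implicit. Unset Printing Implicit Defensive.

(* The Boolean lattice Q_N is {set 'I_N} ordered by \subset.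
   A blue/red coloring of Q_N is a map {set 'I_N} -> bool; [true] = red,
   [false] = blue. *)
Definition coloring (N : nat) := {set 'I_N} -> bool.

(* A copy of the alternating chain C_t^(rbr): t elements
   ch 0 \proper ch 1 \proper ... \proper ch (t-1) (an induced chain of size t)
   with ch i red iff i is even (the minimal element ch 0 is red). *)
Definition has_rbr_chain (N t : nat) (c : coloring N) : Prop :=
  exists ch : 'I_t -> {set 'I_N},
    (forall i j : 'I_t, i < j -> ch i \proper ch j) /\
    (forall i : 'I_t, c (ch i) = ~~ odd i).

Definition has_mono_Qn (N n : nat) (c : coloring N) : Prop :=
  exists (f : {set 'I_n} -> {set 'I_N}) (col : bool),
    (forall X Y : {set 'I_n}, (f X \subset f Y) = (X \subset Y)) /\
    (forall X : {set 'I_n}, c (f X) = col).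

Definition EH_property (t n N : nat) : Prop :=
  forall c : coloring N, has_rbr_chain t c \/ has_mono_Qn n c.

(* The poset Erdos-Hajnal number is the least N with EH_property t n N;
   "R~ <= M" means some N <= M has the property. *)
Definition EH_number_le (t n M : nat) : Prop :=
  exists2 N, N <= M & EH_property t n N.

(* Main.v *)
Require Import Defs.
From mathcomp Require Import all_boot zify.
From Stdlib Require Import Classical.
Set Implicit Arguments. Unset Strict Implicit. Unset Printing Implicit Defensive.

Lemma num_lt n j b i : 0 < n -> i < n -> (j * n + i < b * n) = (j < b).
Proof.
move=> n0 ilt.
rewrite -(ltn_divLR _ _ n0) divnMDl // divn_small // addn0 //.
Qed.

Definition blk N (x0 : 'I_N) n j (i : 'I_n) : 'I_N := insubd x0 (j * n + i).
Arguments blk {N} x0 {n} j i.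
Definition pre N n j : {set 'I_N} := [set x : 'I_N | x < j * n].

Lemma val_blk N (x0 : 'I_N) n k j (i : 'I_n) :
  k * n <= N -> j < k -> (blk x0 j i : nat) = j * n + i.
Proof.
move=> kN jk; rewrite /blk val_insubd.
have -> : j * n + i < N.
  apply: (leq_trans _ kN).
  apply: (@leq_trans (j.+1 * n)); first by rewrite mulSn addnC ltn_add2r.
  by rewrite leq_mul2r jk orbT.
by [].
Qed.

Lemma blk_eq N (x0 : 'I_N) n k j j' (i i' : 'I_n) :
  k * n <= N -> j < k -> j' < k -> blk x0 j i = blk x0 j' i' -> j = j' /\ i = i'.
Proof.
move=> kN jk j'k /(congr1 val) /=.
rewrite (val_blk x0 i kN jk) (val_blk x0 i' kN j'k) => E.
have n0 : 0 < n := leq_ltn_trans (leq0n i) (ltn_ord i).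
have E1 := congr1 (fun m => m %/ n) E.
rewrite /= !divnMDl // !divn_small // !addn0 in E1.
split=> //; subst j'.
by apply: val_inj; move/eqP: E; rewrite eqn_add2l => /eqP.
Qed.

Lemma blk_pre N (x0 : 'I_N) n k j b (i : 'I_n) :
  k * n <= N -> j < k -> (blk x0 j i \in pre N n b) = (j < b).
Proof.
move=> kN jk; rewrite inE (val_blk x0 i kN jk) num_lt //.
exact: leq_ltn_trans (leq0n i) (ltn_ord i).
Qed.

Lemma emb_ok (T : finType) n (e : 'I_n -> T) (D C : {set T}) (p : {set 'I_n} -> bool) :
  injective e -> (forall i, e i \notin D) -> (forall i, e i \notin C) ->
  (forall X Y : {set 'I_n}, X \subset Y -> p X -> p Y) ->
  forall X Y : {set 'I_n}, (D :|: e @: X :|: (if p X then C else set0) \subset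
               D :|: e @: Y :|: (if p Y then C else set0)) = (X \subset Y).
Proof.
move=> ei eD eC pm X Y; apply/idP/idP.
  move/subsetP=> H; apply/subsetP=> i iX.
  have : e i \in D :|: e @: X :|: (if p X then C else set0).
    by rewrite inE; apply/orP; left; rewrite inE imset_f ?orbT.
  move/H; rewrite !inE (negbTE (eD i)) (mem_imset _ _ ei) /=.
  by case: (p Y); rewrite ?inE ?(negbTE (eC i)) ?orbF.
move=> XY; apply/subsetP=> z; rewrite !inE => /orP[/orP[->//|/imsetP[i iX ->]]|].
  by rewrite imset_f ?orbT // (subsetP XY).
case pX: (p X); rewrite ?inE // => zC.
by rewrite (pm _ _ XY pX) zC !orbT.
Qed.

Lemma nm_ex N n (c : coloring N) : ~ has_mono_Qn n c ->
  forall (f : {set 'I_n} -> {set 'I_N}) (col : bool),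
  (forall X Y : {set 'I_n}, (f X \subset f Y) = (X \subset Y)) ->
  exists X, c (f X) = ~~ col.
Proof.
move=> H f col Hf; apply: NNPP => H2; apply: H; exists f, col; split=> // X.
case: (boolP (c (f X) == col)) => [/eqP//|ne]; exfalso; apply: H2; exists X.
by move: ne; case: (c (f X)); case: col.
Qed.

Lemma chain_of N (g : nat -> {set 'I_N}) m :
  (forall i, i < m -> g i \proper g i.+1) ->
  forall i j, i < j -> j <= m -> g i \proper g j.
Proof.
move=> H i; elim=> [//|j IH] ij jm.
rewrite ltnS leq_eqVlt in ij; case/orP: ij => [/eqP->|ij]; first exact: H.
exact: (proper_trans (IH ij (ltnW jm)) (H _ jm)).
Qed.

Lemma emb0 (T : finType) n (e : 'I_n -> T) (D : {set T}) :
  injective e -> (forall i, e i \notin D) ->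
  forall X Y : {set 'I_n}, (D :|: e @: X \subset D :|: e @: Y) = (X \subset Y).
Proof.
move=> ei eD X Y.
have := @emb_ok T n e D set0 (fun _ => false) ei eD (fun i => negbT (in_set0 (e i)))
  (fun _ _ _ h => h) X Y.
by rewrite /= !setU0.
Qed.

Lemma pre_sub N n a b : a <= b -> pre N n a \subset pre N n b.
Proof.
move=> ab; apply/subsetP=> z; rewrite !inE => lt.
by apply: (leq_trans lt); rewrite leq_mul2r ab orbT.
Qed.

Lemma pre_blk_sub N (x0 : 'I_N) n k i (Y : {set 'I_n}) :
  k * n <= N -> i < k -> pre N n i :|: blk x0 i @: Y \subset pre N n i.+1.
Proof.
move=> kN ik; apply/subsetP=> z; rewrite !inE => /orP[lt|/imsetP[a _ ->]].
  by apply: (leq_trans lt); rewrite leq_mul2r leqnSn orbT.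
by have := blk_pre x0 i.+1 a kN ik; rewrite inE ltnSn.
Qed.

Lemma main_gen N n m (x0 : 'I_N) (c : coloring N) :
  0 < n -> m.+2 * n <= N -> ~ has_mono_Qn n c -> has_rbr_chain m.+3 c.
Proof.
move=> n0 kN nm.
have binj : forall j, j < m.+2 -> injective (@blk N x0 n j).
  by move=> j jk i i' /(blk_eq kN jk jk) [].
pose Ys j := odflt set0 [pick Y : {set 'I_n} | c (pre N n j :|: blk x0 j @: Y) == ~~ odd j].
have HY : forall j, j < m -> c (pre N n j :|: blk x0 j @: Ys j) = ~~ odd j.
  move=> j jm; have jk : j < m.+2 by lia.
  rewrite /Ys; case: pickP => [Y /eqP //|none]; exfalso.
  have [Y HYc] := nm_ex nm (f := fun Y => pre N n j :|: blk x0 j @: Y) (odd j)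
     (emb0 (binj j jk) (fun i => negbT (etrans (blk_pre x0 j i kN jk) (ltnn j)))).
  by move: (none Y); rewrite /= HYc eqxx.
pose Z (Y : {set 'I_n}) := pre N n m :|: blk x0 m @: Y.
pose p Y := [exists x : {set 'I_N}, (pre N n m \subset x) && (x \subset Z Y) && (c x == ~~ odd m)].
pose C := ~: pre N n m.+1.
have pm : forall X Y : {set 'I_n}, X \subset Y -> p X -> p Y.
  move=> X Y XY /existsP[x /andP[/andP[h1 h2] h3]]; apply/existsP; exists x.
  by rewrite h1 h3 (subset_trans h2) // /Z setUS // imsetS.
have mk : m < m.+2 by lia.
have eC : forall i : 'I_n, blk x0 m i \notin C.
  by move=> i; rewrite /C in_setC negbK (blk_pre x0 m.+1 i kN mk).
have eD : forall i : 'I_n, blk x0 m i \notin pre N n m.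
  by move=> i; rewrite (blk_pre x0 m i kN mk) ltnn.
have [Y HYc] := nm_ex nm (odd m) (emb_ok (binj m mk) eD eC pm).
move: HYc; case pY: (p Y) => HYc; last first.
  move/negbT: pY => /existsP; case; exists (Z Y).
  by rewrite subxx subsetUl -HYc setU0 eqxx.
case/existsP: pY => x /andP[/andP[xP xZ] xc].
have k1 : m.+1 < m.+2 by lia.
have eD1 : forall i : 'I_n, blk x0 m.+1 i \notin Z Y.
  move=> i; rewrite /Z in_setU negb_or (blk_pre x0 m i kN k1) ltnNge leqnSn /=.
  apply/imsetP => [[i' _ E]]; have [] := blk_eq kN k1 mk E; lia.
have [W HW] := nm_ex nm (~~ odd m) (emb0 (binj _ k1) eD1).
rewrite negbK in HW.
pose g i := if i < m then pre N n i :|: blk x0 i @: Ys i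
            else if i == m then x
            else if i == m.+1 then Z Y :|: blk x0 m.+1 @: W
            else Z Y :|: C.
have gc : forall i, i <= m.+2 -> c (g i) = ~~ odd i.
  move=> i im; rewrite /g.
  case: (ltngtP i m) => [lt|gt|->]; last by apply/eqP.
    by rewrite HY.
  case: (eqVneq i m.+1) => [->|ne1]; first by rewrite /= negbK.
  have -> : i = m.+2 by lia.
  by rewrite /= negbK.
have gs : forall i, i < m.+2 -> g i \subset g i.+1.
  move=> i im; rewrite /g.
  have [lt|ge] := ltnP i.+1 m.
    rewrite (ltnW lt).
    apply: subset_trans (pre_blk_sub x0 (Ys i) kN _) _; [lia|exact: subsetUl].
  case: (eqVneq i.+1 m) => [eq|ne].
    have ilt : i < m by lia.
    rewrite ilt.
    by apply: subset_trans xP; rewrite -eq; apply: (pre_blk_sub x0 _ kN); lia.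
  have F1 : (i < m) = false by lia.
  have F2 : (i.+1 < m) = false by lia.
  rewrite F1.
  case: (eqVneq i m) => [->|ne2].
    rewrite eqxx.
    by apply: (subset_trans xZ); exact: subsetUl.
  have -> : i = m.+1 by lia.
  have F3 : (m.+1 == m) = false by lia.
  have F4 : (m.+2 == m.+1) = false by lia.
  rewrite eqxx F4 setUS //; apply/subsetP => z /imsetP[a _ ->].
  by rewrite /C in_setC (blk_pre x0 m.+1 a kN k1) ltnn.
have gp : forall i, i < m.+2 -> g i \proper g i.+1.
  move=> i im; rewrite properEneq gs // andbT; apply/eqP => E.
  have := gc i (ltnW im); have := gc i.+1 im; rewrite E => -> /=.
  by case: (odd i).
exists (fun i : 'I_m.+3 => g i); split.
  by move=> i j ij; apply: (chain_of gp ij); rewrite -ltnS ltn_ord.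
by move=> i; apply: gc; rewrite -ltnS ltn_ord.
Qed.

Theorem lemma16 (n t : nat) : 0 < n -> 3 <= t -> EH_number_le t n ((t - 1) * n).
Proof.
move=> n0 t3; exists ((t - 1) * n) => // c.
case: (classic (has_mono_Qn n c)) => [H|nm]; [by right|left].
have x0 : 'I_((t - 1) * n) by exists 0; rewrite muln_gt0 n0 andbT; lia.
have kN : (t - 3).+2 * n <= (t - 1) * n by rewrite leq_mul2r; apply/orP; right; lia.
have := main_gen x0 n0 kN nm.
have -> : (t - 3).+3 = t by lia.
by [].
Qed.
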